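(* Let $n\geq 1$ and let $x=(x_1,\dots,x_n)\in B^n$ be such that every iterate $S^jx$, $j\geq0$, has strictly positive last coordinate and the expansion is eventually periodic: $S^{m+p}x=S^mx$ for some $m\geq0$, $p\geq1$. Let $k_j:=\lfloor 1/(S^{j-1}x)_n\rfloor$ and let the periodicity matrix be $\beta^{(p)}:=\beta(k_{m+1})\cdots\beta(k_{m+p})$. Let $\rho_0$ be the largest eigenvalue of $\beta^{(p)}$ (its spectral radius, a real positive eigenvalue since $\beta^{(p)}$ has nonnegative entries). Then $x_1,\dots,x_n$ are rational functions with rational coefficients of $\rho_0$; consequently $x_1,\dots,x_n$ lie in the number field $\mathbb{Q}(\rho_0)$, whose degree is at most $n+1$.
   Context: $B^n:=\{(x_1,\dots,x_n)\in\mathbb{R}^n:1\geq x_1\geq\dots\geq x_n\geq0\}$. The multiplicative Selmer algorithm is the map, defined for $x\in B^n$ with $x_n>0$, $S(x_1,\dots,x_n)=\left(\frac{x_2}{x_1},\dots,\frac{x_n}{x_1},\frac{1-kx_n}{x_1}\right)$ with $k=\lfloor x_n^{-1}\rfloor$. For $k\in\mathbb{N}$, $\beta(k)$ is the $(n+1)\times(n+1)$ integer matrix (indices $0,\dots,n$) with entries $\beta(k)_{0,n-1}=k$, $\beta(k)_{0,n}=1$, $\beta(k)_{i,i-1}=1$ for $1\leq i\leq n$, and all other entries $0$. *)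

(* Defs.v *)
From HB Require Import structures.
From mathcomp Require Import all_boot all_order all_algebra.
From mathcomp Require Import reals.
From mathcomp Require Import complex.
Set Implicit Arguments. Unset Strict Implicit. Unset Printing Implicit Defensive.
Import Order.TTheory GRing.Theory Num.Theory.
Local Open Scope ring_scope.

Section Selmer.
Variables (R : realType) (n : nat).

(* 1-based coordinate access: [selcoord x i] is x_i for 1 <= i <= n, 0 otherwise. *)
Definition selcoord (x : 'rV[R]_n) (i : nat) : R :=
  if i is i'.+1 then (if insub i' is Some j then x 0 j else 0) else 0.

Definition inB (x : 'rV[R]_n) : Prop :=
  selcoord x 1 <= 1 /\ (forall i : nat, (1 <= i < n)%N -> selcoord x i.+1 <= selcoord x i)
  /\ 0 <= selcoord x n.

Definition selk (x : 'rV[R]_n) : nat := Num.truncn (1 / selcoord x n).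

Definition selmer (x : 'rV[R]_n) : 'rV[R]_n :=
  \row_(j < n) (if (j.+1 < n)%N then selcoord x j.+2 / selcoord x 1
                else (1 - (selk x)%:R * selcoord x n) / selcoord x 1).

Definition beta (k : nat) : 'M[R]_n.+1 :=
  \matrix_(i < n.+1, j < n.+1)
    (if (i == 0%N :> nat) && (j == n.-1 :> nat) then k%:R
     else if (i == 0%N :> nat) && (j == n :> nat) then 1
     else if (i == j.+1 :> nat) then 1 else 0).

End Selmer.

(* Main.v *)
Require Import Defs.
From HB Require Import structures.
From mathcomp Require Import all_boot all_order all_algebra.
From mathcomp Require Import reals.
From mathcomp Require Import complex.
Import Order.TTheory GRing.Theory Num.Theory.
Local Open Scope ring_scope.
From mathcomp Require Import zify ring lra.

Set Implicit Arguments. Unset Strict Implicit. Unset Printing Implicit Defensive.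

Section Zero.
Variables (R : realType) (n : nat).
Hypothesis n_gt0 : (0 < n)%N.

Local Notation beta := (@beta R n).

Lemma beta_mulE k (v : 'cV[R]_n.+1) (i : 'I_n.+1) :
  (beta k *m v) i 0 = if (i == 0%N :> nat) then k%:R * v (inord n.-1) 0 + v ord_max 0
                      else v (inord i.-1) 0.
Proof.
rewrite mxE.
have hn1 : (n.-1 < n.+1)%N by rewrite prednK // ltnW.
have neq : (inord n.-1 : 'I_n.+1) != ord_max.
  apply/negP => /eqP/(congr1 val); rewrite /= inordK //; move: n_gt0; lia.
case: ifP => [/eqP i0 | i0].
  rewrite (bigD1 (inord n.-1)) //= (bigD1 ord_max) /=; last by rewrite eq_sym.
  rewrite big1 ?addr0.
    rewrite !mxE i0 inordK //= eqxx /= ifF //; last first.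
      by apply/negbTE/eqP; move: n_gt0; lia.
    by rewrite eqxx mul1r.
  move=> j /andP [hj1 hj2]; rewrite !mxE i0 /=.
  have -> : (j == n.-1 :> nat) = false.
    by apply/negbTE; apply: contra hj1 => /eqP hj; apply/eqP/val_inj; rewrite /= inordK.
  have -> : (j == n :> nat) = false.
    by apply/negbTE; apply: contra hj2 => /eqP hj; apply/eqP/val_inj.
  by rewrite mul0r.
have hi : (i.-1 < n.+1)%N by rewrite (leq_ltn_trans (leq_pred _)).
rewrite (bigD1 (inord i.-1)) //= big1 ?addr0.
  rewrite !mxE i0 /= inordK // prednK ?eqxx ?mul1r //.
  by rewrite lt0n; apply/negbT.
move=> j hj; rewrite !mxE i0 /=.
case: eqP => [hij|]; last by rewrite mul0r.
exfalso; move/negP: hj; apply; apply/eqP/val_inj; by rewrite /= inordK // hij.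
Qed.


Local Notation f := (@ord_pred n.+1).

Lemma val_ord_pred (i : 'I_n.+1) :
  val (f i) = if (i == 0%N :> nat) then n else i.-1.
Proof.
rewrite /=; case: ifP => [/eqP -> | /negbT hi].
  by rewrite add0n /= modn_small.
have hi' := ltn_ord i.
have -> : (i + n.+1).-1 = i.-1 + n.+1 by move: hi; rewrite -lt0n; lia.
by rewrite modnDr modn_small // (leq_ltn_trans (leq_pred _) hi').
Qed.

Lemma iter_pred t (i : 'I_n.+1) : (t <= i)%N -> val (iter t f i) = (i - t)%N.
Proof.
elim: t => [|t IH] ht; first by rewrite subn0.
rewrite iterS val_ord_pred IH ?(ltnW ht) //.
have -> : ((i - t)%N == 0%N) = false by apply/negbTE; rewrite subn_eq0 -ltnNge.
by rewrite subnS.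
Qed.

Lemma iter_inj t : injective (iter t f).
Proof.
elim: t => [|t IH] a b //=.
by move/ord_pred_inj/IH.
Qed.

Section ZeroLemma.
Variables (ks : nat -> nat) (p : nat) (rho : R) (y : 'cV[R]_n.+1).
Hypothesis ks_gt0 : forall j, (0 < ks j)%N.
Hypothesis p_gt0 : (0 < p)%N.
Hypothesis rho_gt0 : 0 < rho.
Hypothesis y_ge0 : forall i, 0 <= y i 0.
Hypothesis y_eig : (\prod_(j < p) beta (ks j)) *m y = rho *: y.

Let U l := (\prod_(l <= j < p) beta (ks j)) *m y.

Let U_rec l : (l < p)%N -> U l = beta (ks l) *m U l.+1.
Proof. by move=> hl; rewrite /U big_ltn // mulmxA. Qed.

Let U_p : U p = y.
Proof. by rewrite /U big_geq // mul1mx. Qed.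

Let U_0 : U 0 = rho *: y.
Proof. by rewrite /U -y_eig big_mkord. Qed.

Let U_ge0 l : (l <= p)%N -> forall i, 0 <= U l i 0.
Proof.
suff H : forall d, (d <= p)%N -> forall i, 0 <= U (p - d)%N i 0.
  by move=> hl; rewrite -(subKn hl); apply: H; rewrite leq_subr.
elim=> [|d IH] hd i.
  by rewrite subn0 U_p.
have hlt : ((p - d.+1) < p)%N by move: hd p_gt0; lia.
rewrite U_rec // beta_mulE.
have -> : ((p - d.+1).+1 = p - d)%N by move: hd; lia.
case: ifP => _.
  by rewrite addr_ge0 ?mulr_ge0 ?ler0n // IH // ltnW.
by rewrite IH // ltnW.
Qed.

Let Z l := [set i | U l i 0 == 0].

Let Z_step l : (l < p)%N -> (f @: Z l \subset Z l.+1) /\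
   (ord0 \in Z l -> f ord_max \in Z l.+1).
Proof.
move=> hl.
have hge := U_ge0 (ltnW hl).
have hge' := U_ge0 hl.
have key : forall i, U l i 0 = 0 -> U l.+1 (f i) 0 = 0 /\ (i == ord0 -> U l.+1 (f ord_max) 0 = 0).
  move=> i; rewrite U_rec // beta_mulE.
  case: ifP => [/eqP i0 | i0] h0.
    have hk : 0 < (ks l)%:R :> R by rewrite ltr0n.
    have h1 : 0 <= (ks l)%:R * U l.+1 (inord n.-1) 0 by rewrite mulr_ge0 ?ler0n ?hge'.
    have h2 := hge' ord_max.
    have [e1 e2] : (ks l)%:R * U l.+1 (inord n.-1) 0 = 0 /\ U l.+1 ord_max 0 = 0.
      split; apply/eqP; rewrite eq_le; apply/andP; split => //; move: h0; lra.
    have e3 : U l.+1 (inord n.-1) 0 = 0.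
      by move/eqP: e1; rewrite mulf_eq0 pnatr_eq0 (negbTE (lt0n_neq0 (ks_gt0 l))) /= => /eqP.
    have fmax : f ord_max = inord n.-1.
      by apply/val_inj; rewrite val_ord_pred /= inordK ?ifF //; move: n_gt0; lia.
    have f0 : f i = ord_max.
      by apply/val_inj; rewrite val_ord_pred i0 eqxx.
    by rewrite f0 fmax; split.
  have fi : f i = inord i.-1.
    apply/val_inj; rewrite val_ord_pred i0 /= inordK //.
    by rewrite (leq_ltn_trans (leq_pred _)).
  split; first by rewrite fi.
  by move=> /eqP hi; rewrite hi in i0.
split.
  apply/subsetP => j; case/imsetP => i; rewrite !inE => /eqP hi ->.
  by rewrite (proj1 (key i hi)).
by rewrite !inE => /eqP h; rewrite (proj2 (key _ h)) ?eqxx.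
Qed.

Let Z0p : Z 0 = Z p.
Proof.
apply/setP => i; rewrite !inE U_0 U_p mxE mulf_eq0.
by rewrite (negbTE (lt0r_neq0 rho_gt0)).
Qed.

Let card_mono a b : (a <= b <= p)%N -> (#|Z a| <= #|Z b|)%N.
Proof.
elim: b => [|b IH] /andP [hab hb].
  by move: hab; rewrite leqn0 => /eqP ->.
case: (ltngtP a b.+1) hab => // [hlt | ->] _ //.
apply: (leq_trans (IH _)); first by rewrite -ltnS hlt ltnW.
rewrite -(card_imset (Z b) (@ord_pred_inj _)).
by apply: subset_leq_card; case: (Z_step hb).
Qed.

Let card_eq l : (l <= p)%N -> #|Z l| = #|Z 0|.
Proof.
move=> hl; apply/eqP; rewrite eqn_leq; apply/andP; split.
  by rewrite Z0p; apply: card_mono; rewrite hl leqnn.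
by apply: card_mono; rewrite hl.
Qed.

Let Z_eq l : (l < p)%N -> Z l.+1 = f @: Z l.
Proof.
move=> hl; apply/esym/eqP; rewrite eqEcard (proj1 (Z_step hl)) /=.
rewrite card_imset; last exact: ord_pred_inj.
by rewrite !card_eq // ltnW.
Qed.

Let Z_wrap l : (l < p)%N -> ord0 \in Z l -> ord_max \in Z l.
Proof.
move=> hl h0; have := (proj2 (Z_step hl)) h0.
by rewrite Z_eq // mem_imset //; exact: ord_pred_inj.
Qed.

Let W t := iter t (fun S => f @: S) (Z 0).

Let W_Z l : (l <= p)%N -> W l = Z l.
Proof.
elim: l => [|l IH] hl //=.
by rewrite IH ?(ltnW hl) // Z_eq.
Qed.

Let W_mod t : W t = W (t %% p).
Proof.
suff H : forall q r, W (q * p + r)%N = W r.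
  by rewrite {1}(divn_eq t p) H.
elim=> [|q IH] r; first by rewrite mul0n add0n.
rewrite mulSn -addnA addnC /W iterD.
have := W_Z (leqnn p); rewrite /W => ->; rewrite -Z0p.
exact: IH.
Qed.

Let W_wrap t : ord0 \in W t -> ord_max \in W t.
Proof.
have hl : (t %% p < p)%N by rewrite ltn_pmod.
by rewrite W_mod W_Z ?(ltnW hl) //; apply: Z_wrap.
Qed.

Let W_mem t i : i \in Z 0 -> iter t f i \in W t.
Proof.
move=> hi; elim: t => [|t IH] //=.
by apply: imset_f.
Qed.

Let W_inv t j : j \in W t -> exists2 i, i \in Z 0 & j = iter t f i.
Proof.
elim: t j => [|t IH] j /=; first by move=> h; exists j.
case/imsetP => k /IH [i hi ->] ->; exists i => //.
Qed.

Let Z_closed i : i \in Z 0 -> f i \in Z 0.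
Proof.
move=> hi.
have h0 : iter i f i = ord0 by apply/val_inj; rewrite iter_pred // subnn.
have := W_mem i hi; rewrite h0 => /W_wrap /W_inv [q hq].
have -> : (ord_max : 'I_n.+1) = iter i f (f i).
  by rewrite -iterSr iterS h0; apply/val_inj; rewrite val_ord_pred.
by move/iter_inj => ->.
Qed.

Let Z_closed_iter t i : i \in Z 0 -> iter t f i \in Z 0.
Proof. by move=> hi; elim: t => [|t IH] //=; apply: Z_closed. Qed.

Lemma zero_lemma : (exists i, y i 0 = 0) -> y = 0.
Proof.
case=> i0 hi0.
have hZ : i0 \in Z 0 by rewrite inE U_0 mxE hi0 mulr0.
have h0 : ord0 \in Z 0.
  have -> : (ord0 : 'I_n.+1) = iter i0 f i0 by apply/val_inj; rewrite iter_pred // subnn.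
  exact: Z_closed_iter.
have hmax : ord_max \in Z 0.
  have -> : (ord_max : 'I_n.+1) = f ord0 by apply/val_inj; rewrite val_ord_pred.
  exact: Z_closed.
apply/matrixP => j k; rewrite (ord1 k) mxE.
have -> : j = iter (n - j)%N f ord_max.
  by apply/val_inj; rewrite iter_pred /= ?subKn // ?leq_subr // -ltnS.
move: (Z_closed_iter (n - j)%N hmax); rewrite inE U_0 mxE mulf_eq0.
by rewrite (negbTE (lt0r_neq0 rho_gt0)) /= => /eqP.
Qed.

End ZeroLemma.

Lemma eig_unique (ks : nat -> nat) p (rho : R) (w v : 'cV[R]_n.+1) :
  (forall j, 0 < ks j)%N -> (0 < p)%N -> 0 < rho ->
  (forall i, 0 < w i 0) ->
  (\prod_(j < p) beta (ks j)) *m w = rho *: w ->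
  (\prod_(j < p) beta (ks j)) *m v = rho *: v ->
  v = (v ord0 0 / w ord0 0) *: w.
Proof.
move=> hks hp hrho hw ew ev.
set A := \prod_(j < p) beta (ks j) in ew ev.
set c := v ord0 0 / w ord0 0.
set z := v - c *: w.
have ez : A *m z = rho *: z.
  by rewrite /z mulmxBr -scalemxAr ew ev scalerBr !scalerA mulrC.
have z0 : z ord0 0 = 0.
  by rewrite /z !mxE /c divfK ?subrr // lt0r_neq0.
have vz : v = z + c *: w by rewrite /z subrK.
clearbody z; rewrite vz.
case: (@arg_maxP _ _ _ ord0 xpredT (fun i => z i 0 / w i 0) isT) => im _ hmax.
set s := z im 0 / w im 0.
have hy : s *: w - z = 0.
  apply: (@zero_lemma ks p rho) => //.
  - move=> i; rewrite mxE [_ *: w]lock mxE -lock mxE subr_ge0.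
    have h := hmax i isT.
    have -> : z i 0 = (z i 0 / w i 0) * w i 0 by rewrite divfK // lt0r_neq0.
    by rewrite ler_wpM2r // ltW.
  - by rewrite mulmxBr -scalemxAr ew ez scalerBr !scalerA mulrC.
  - by exists im; rewrite !mxE /s divfK ?subrr // lt0r_neq0.
have zs : z = s *: w by apply/eqP; rewrite eq_sym -subr_eq0 hy.
have s0 : s = 0.
  move: z0; rewrite zs mxE => /eqP; rewrite mulf_eq0 => /orP [/eqP //|].
  by rewrite (negbTE (lt0r_neq0 (hw ord0))).
by rewrite zs s0 scale0r add0r.
Qed.

End Zero.

Section Dyn.
Variables (R : realType) (n : nat).
Hypothesis n_gt0 : (0 < n)%N.

Local Notation sc := (@selcoord R n).
Local Notation S := (@selmer R n).

Lemma selcoordE (x : 'rV[R]_n) (j : 'I_n) : sc x j.+1 = x 0 j.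
Proof.
rewrite /selcoord; case: insubP => [k _ hk | ]; last by rewrite ltn_ord.
by have -> : k = j by apply/val_inj.
Qed.

Lemma selcoord_selmer (x : 'rV[R]_n) j : (0 < j <= n)%N ->
  sc (S x) j = if (j < n)%N then sc x j.+1 / sc x 1
               else (1 - (selk x)%:R * sc x n) / sc x 1.
Proof.
case: j => // j /= hj.
have hj' : (j < n)%N by [].
by have := selcoordE (S x) (Ordinal hj'); rewrite /= => ->; rewrite mxE.
Qed.

Lemma sc_sorted (x : 'rV[R]_n) i j : inB x -> (0 < i)%N -> (i <= j <= n)%N ->
  sc x j <= sc x i.
Proof.
case=> _ [hs _] hi.
elim: j => [|j IH] /andP [hij hjn]; first by move: hi hij; lia.
case: (ltngtP i j.+1) hij => // [hlt | ->] _ //.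
have hij : (i <= j <= n)%N by move: hlt hjn; lia.
apply: (le_trans _ (IH hij)); apply: hs; move: hi hlt hjn; lia.
Qed.

Lemma selk_bounds (x : 'rV[R]_n) : 0 < sc x n ->
  (selk x)%:R * sc x n <= 1 /\ 1 < ((selk x)%:R + 1) * sc x n.
Proof.
move=> hb; rewrite /selk.
have h0 : 0 <= 1 / sc x n by rewrite divr_ge0 // ltW.
case/andP: (truncn_itv h0) => h1 h2.
split.
  by move: h1; rewrite ler_pdivlMr.
by move: h2; rewrite ltr_pdivrMr // -natr1.
Qed.

Lemma selk_gt0 (x : 'rV[R]_n) : inB x -> 0 < sc x n -> (0 < selk x)%N.
Proof.
move=> hB hb; rewrite /selk truncn_gt0.
have h1 : sc x n <= 1.
  apply: le_trans (proj1 hB); apply: sc_sorted => //; by rewrite n_gt0 leqnn.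
by rewrite ler_pdivlMr // mul1r.
Qed.

Lemma sc1_gt0 (x : 'rV[R]_n) : inB x -> 0 < sc x n -> 0 < sc x 1.
Proof.
move=> hB hb; apply: (lt_le_trans hb); apply: sc_sorted => //.
by rewrite n_gt0 leqnn.
Qed.

Lemma inB_selmer (x : 'rV[R]_n) : inB x -> 0 < sc x n -> inB (S x).
Proof.
move=> hB hb.
have ha := sc1_gt0 hB hb.
have [hk1 hk2] := selk_bounds hb.
move: hk2; rewrite mulrDl mul1r => hk2.
have key : 1 - (selk x)%:R * sc x n <= sc x n by lra.
split; [|split].
- have h1 : (0 < 1 <= n)%N by rewrite n_gt0.
  rewrite (selcoord_selmer _ h1); case: (ltnP 1 n) => h1n.
    rewrite ler_pdivrMr // mul1r; apply: sc_sorted => //.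
  have ab : sc x 1 = sc x n by congr selcoord; move: h1n n_gt0; lia.
  by rewrite ab ler_pdivrMr // mul1r.
- move=> i /andP [hi1 hin].
  have hA : (0 < i.+1 <= n)%N by move: hin; lia.
  have hB' : (0 < i <= n)%N by move: hin hi1; lia.
  rewrite (selcoord_selmer _ hA) (selcoord_selmer _ hB') hin.
  case: ifP => hi2; rewrite ler_pM2r ?invr_gt0 //.
    by apply: sc_sorted => //; move: hi2; lia.
  have -> : sc x i.+1 = sc x n by congr selcoord; move: hi2 hin; lia.
  exact: key.
- rewrite selcoord_selmer ?n_gt0 ?leqnn // ltnn.
  by rewrite divr_ge0 ?subr_ge0 // ltW.
Qed.

Definition vv (x : 'rV[R]_n) : 'cV[R]_n.+1 :=
  \col_(i < n.+1) (if (i == 0%N :> nat) then 1 else sc x i).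

Lemma vv_step (x : 'rV[R]_n) : inB x -> 0 < sc x n ->
  vv x = sc x 1 *: (@beta R n (selk x) *m vv (S x)).
Proof.
move=> hB hb.
have ha := sc1_gt0 hB hb.
have ha0 : sc x 1 != 0 by rewrite lt0r_neq0.
apply/matrixP => i k; rewrite (ord1 k) [RHS]mxE beta_mulE // !mxE.
case: ifP => [/eqP i0 | i0].
  have hmax : ((@ord_max n : nat) == 0%N) = false.
    by apply: negbTE; rewrite /= -lt0n.
  have hn : (0 < n <= n)%N by rewrite n_gt0 leqnn.
  rewrite inordK; last by move: n_gt0; lia.
  rewrite hmax (selcoord_selmer _ hn) ltnn.
  case: ifP => [/eqP n1 | n1].
    have ab : sc x 1 = sc x n by congr selcoord; move: n1 n_gt0; lia.
    rewrite -ab; field; exact: ha0.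
  have hn' : (0 < n.-1 <= n)%N by move: n1 n_gt0; lia.
  rewrite selcoord_selmer // ifT; last by move: n_gt0; lia.
  rewrite prednK //; field; exact: ha0.
rewrite inordK; last by move: (ltn_ord i); lia.
case: ifP => [/eqP i1 | i1].
  have -> : sc x i = sc x 1 by congr selcoord; move: i1 i0; lia.
  by rewrite mulr1.
have hi' : (0 < i.-1 <= n)%N by move: i1 i0 (ltn_ord i); lia.
rewrite selcoord_selmer // ifT; last by move: i0 (ltn_ord i); lia.
rewrite prednK; last by move: i0; lia.
field; exact: ha0.
Qed.

Section Orbit.
Variable x : 'rV[R]_n.
Hypothesis hB : inB x.
Hypothesis hpos : forall j, 0 < sc (iter j S x) n.

Lemma inB_iter j : inB (iter j S x).
Proof. by elim: j => [|j IH] //=; apply: inB_selmer. Qed.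

Lemma vv_iter a d :
  vv (iter a S x) = (\prod_(j < d) sc (iter (a + j) S x) 1) *:
    ((\prod_(j < d) @beta R n (selk (iter (a + j) S x))) *m vv (iter (a + d) S x)).
Proof.
elim: d => [|d IH].
  by rewrite !big_ord0 scale1r mul1mx addn0.
rewrite IH !big_ord_recr /= (vv_step (inB_iter _) (hpos _)) addnS iterS.
rewrite -scalemxAr scalerA -mulmxA; reflexivity.
Qed.

End Orbit.

End Dyn.

Lemma eig_tr (F : fieldType) N (A : 'M[F]_N) a : eigenvalue A^T a = eigenvalue A a.
Proof.
rewrite /eigenvalue /eigenspace !kermx_eq0 !row_free_unit.
have -> : A^T - a%:M = (A - a%:M)^T by rewrite linearB /= tr_scalar_mx.
by rewrite unitmx_tr.
Qed.

Section Eig.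
Variables (R : realType) (n : nat).

Definition nonnegmx (A : 'M[R]_n.+1) := forall i j, 0 <= A i j.

Lemma nonneg_beta k : nonnegmx (@beta R n k).
Proof. by move=> i j; rewrite mxE; do 3 (case: ifP => _ //); rewrite ler0n. Qed.

Lemma nonneg_prod p (F : 'I_p -> 'M[R]_n.+1) :
  (forall j, nonnegmx (F j)) -> nonnegmx (\prod_(j < p) F j).
Proof.
move=> hF; apply: (big_ind (fun M => nonnegmx M)).
- by move=> i j; rewrite mxE ler0n.
- move=> M1 M2 h1 h2 i j; rewrite mxE; apply: sumr_ge0 => k _.
  exact: mulr_ge0.
- by move=> j _; apply: hF.
Qed.

Lemma eig_bound (A : 'M[R]_n.+1) (w : 'cV[R]_n.+1) (z : 'rV[R]_n.+1) lam mu :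
  nonnegmx A -> (forall i, 0 < w i 0) -> A *m w = lam *: w ->
  z != 0 -> z *m A = mu *: z -> `|mu| <= lam.
Proof.
move=> hA hw ew hz ez.
set T := \sum_j `|z 0 j| * w j 0.
have hT : 0 < T.
  have [j hj] : exists j, z 0 j != 0.
    apply/existsP; apply: contraR hz => /existsPn h.
    by apply/eqP/matrixP => i k; rewrite (ord1 i) mxE; apply/eqP/negPn/h.
  rewrite /T (bigD1 j) //=.
  have h1 : 0 < `|z 0 j| * w j 0 by rewrite mulr_gt0 ?normr_gt0.
  have h2 : 0 <= \sum_(k | k != j) `|z 0 k| * w k 0.
    by apply: sumr_ge0 => k _; rewrite mulr_ge0 ?normr_ge0 // ltW.
  lra.
rewrite -(ler_pM2r hT).
have e1 : `|mu| * T = \sum_j `|(z *m A) 0 j| * w j 0.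
  rewrite /T mulr_sumr; apply: eq_bigr => j _.
  by rewrite ez mxE normrM mulrA.
have e2 : lam * T = \sum_i `|z 0 i| * (A *m w) i 0.
  rewrite /T mulr_sumr; apply: eq_bigr => i _.
  by rewrite ew mxE mulrCA.
rewrite e1 e2.
have e3 : \sum_i `|z 0 i| * (A *m w) i 0 = \sum_j \sum_i `|z 0 i| * A i j * w j 0.
  rewrite exchange_big; apply: eq_bigr => i _.
  by rewrite mxE mulr_sumr; apply: eq_bigr => j _; rewrite mulrA.
rewrite e3; apply: ler_sum => j _.
rewrite -mulr_suml ler_wpM2r ?(ltW (hw j)) // mxE.
apply: le_trans (ler_norm_sum _ _ _) _.
apply: ler_sum => i _; rewrite normrM (ger0_norm (hA i j)) //.
Qed.

End Eig.

Definition betaQ (n k : nat) : 'M[rat]_n.+1 :=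
  \matrix_(i < n.+1, j < n.+1)
    (if (i == 0%N :> nat) && (j == n.-1 :> nat) then k%:R
     else if (i == 0%N :> nat) && (j == n :> nat) then 1
     else if (i == j.+1 :> nat) then 1 else 0).

Lemma beta_map (R : realType) n k : @beta R n k = map_mx ratr (betaQ n k).
Proof.
apply/matrixP => i j; rewrite !mxE.
by repeat (case: ifP => _); rewrite ?rmorph_nat ?rmorph1 ?rmorph0.
Qed.

Lemma prod_map (R : realType) n p (F : 'I_p -> 'M[rat]_n.+1) :
  \prod_(j < p) map_mx (ratr : rat -> R) (F j) = map_mx ratr (\prod_(j < p) F j).
Proof.
by rewrite (big_morph (map_mx (ratr : rat -> R)) (@map_mxM _ _ _ _ _ _) (@map_mx1 _ _ _ _)).
Qed.


Unset Implicit Arguments. Set Strict Implicit. Set Printing Implicit Defensive.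

Theorem mainTheorem6 (R : realType) (n : nat) (x : 'rV[R]_n) (m p : nat)
  (rho0 : R) :
  (0 < n)%N ->
  inB x ->
  (forall j : nat, 0 < selcoord (iter j (@selmer R n) x) n) ->
  (0 < p)%N ->
  iter (m + p) (@selmer R n) x = iter m (@selmer R n) x ->
  let betap : 'M[R]_n.+1 :=
    \prod_(j < p) @beta R n (selk (iter (m + j) (@selmer R n) x)) in
  eigenvalue betap rho0 ->
  (forall lambda : R[i],
      eigenvalue (map_mx (fun r : R => r%:C%C) betap) lambda ->
      `|lambda| <= rho0%:C%C) ->
  (forall i : nat, (1 <= i <= n)%N ->
     exists P Q : {poly rat},
       (map_poly ratr Q).[rho0] != 0 /\
       selcoord x i = (map_poly ratr P).[rho0] / (map_poly ratr Q).[rho0])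
  /\
  (exists q : {poly rat}, q != 0 /\ (size q <= n.+2)%N /\
     root (map_poly ratr q) rho0).
Proof.
move=> n_gt0 hB hpos p_gt0 hper betap hrho hmax.
pose ks j := selk (iter (m + j) (@selmer R n) x).
pose AQ := \prod_(j < p) betaQ n (ks j).
have hA : betap = map_mx ratr AQ.
  by rewrite /betap -prod_map; apply: eq_bigr => j _; apply: beta_map.
split; last first.
  exists (char_poly AQ); split; first exact: monic_neq0 (char_poly_monic _).
  split; first by rewrite size_char_poly.
  by rewrite map_char_poly -hA -eigenvalue_root_char.
pose y := iter m (@selmer R n) x.
pose w := vv y.
have hw : forall i, 0 < w i 0.
  move=> i; rewrite /w /vv mxE; case: ifP => // /negbT i0.
  apply: lt_le_trans (hpos m) _; apply: (sc_sorted n_gt0 (inB_iter n_gt0 hB hpos m)).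
    by move: i0; lia.
  by move: i0 (ltn_ord i); lia.
pose C := \prod_(j < p) selcoord (iter (m + j) (@selmer R n) x) 1.
have hC : 0 < C.
  by apply: prodr_gt0 => j _; apply: (sc1_gt0 n_gt0 (inB_iter n_gt0 hB hpos _) (hpos _)).
pose lam := C^-1.
have hlam : 0 < lam by rewrite invr_gt0.
have ew : betap *m w = lam *: w.
  have := vv_iter n_gt0 hB hpos m p; rewrite hper -/y -/w -/betap -/C => hw'.
  by rewrite {2}hw' scalerA /lam mulVf ?scale1r // lt0r_neq0.
have hnn : nonnegmx betap by apply: nonneg_prod => j; apply: nonneg_beta.
have [z ez hz] := eigenvalueP hrho.
have e1 : rho0 <= lam.
  apply: le_trans (ler_norm rho0) _.
  exact: (eig_bound hnn hw ew hz ez).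
have w0 : w ord0 0 = 1 by rewrite /w /vv mxE.
have e2 : lam <= rho0.
  have hev : eigenvalue betap lam.
    rewrite -eig_tr; apply/eigenvalueP; exists w^T.
      by rewrite -trmx_mul ew linearZ.
    apply/eqP => /matrixP /(_ 0 ord0); rewrite mxE w0 mxE => /eqP.
    by rewrite oner_eq0.
  have := hmax lam%:C%C; rewrite eigenvalue_map => /(_ hev).
  by rewrite ger0_norm ?ler0c ?lecR // ltW.
have hrl : rho0 = lam by apply/eqP; rewrite eq_le e1 e2.
have uniq : forall v, betap *m v = rho0 *: v -> v = v ord0 0 *: w.
  move=> v ev; rewrite -[v ord0 0]divr1 -w0.
  apply: (eig_unique n_gt0 (ks := ks) (p := p) (rho := rho0)) => //.
  - move=> j; apply: selk_gt0 => //; first exact: inB_iter.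
  - by rewrite hrl.
  - by rewrite hrl.
have [r hr] : exists r, z 0 r != 0.
  apply/existsP; apply: contraR hz => /existsPn h.
  by apply/eqP/matrixP => i k; rewrite (ord1 i) mxE; apply/eqP/negPn/h.
pose B := rho0%:M - betap.
pose B' := \matrix_(i < n.+1, j < n.+1) (if i == r then (j == ord0)%:R else B i j).
have zB : z *m B = 0 by rewrite /B mulmxBr mul_mx_scalar ez subrr.
have B'r : forall v : 'cV[R]_n.+1, (B' *m v) r 0 = v ord0 0.
  move=> v; rewrite mxE (bigD1 ord0) //= big1 ?addr0.
    by rewrite mxE eqxx mul1r.
  by move=> j hj; rewrite mxE eqxx (negbTE hj) mul0r.
have B'i : forall (v : 'cV[R]_n.+1) i, i != r -> (B' *m v) i 0 = (B *m v) i 0.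
  by move=> v i hi; rewrite !mxE; apply: eq_bigr => j _; rewrite mxE (negbTE hi).
have Binj : forall v : 'cV[R]_n.+1, B' *m v = 0 -> v = 0.
  move=> v hv.
  have v0 : v ord0 0 = 0 by rewrite -B'r hv mxE.
  have hBv : B *m v = 0.
    have hi : forall i, i != r -> (B *m v) i 0 = 0.
      by move=> i hi; rewrite -B'i // hv mxE.
    have hr' : (B *m v) r 0 = 0.
      have : (z *m (B *m v)) 0 0 = 0 by rewrite mulmxA zB mul0mx mxE.
      rewrite mxE (bigD1 r) //= big1 ?addr0.
        by move/eqP; rewrite mulf_eq0 (negbTE hr) /= => /eqP.
      by move=> i hir; rewrite hi // mulr0.
    apply/matrixP => i k; rewrite (ord1 k) [RHS]mxE.
    by case: (eqVneq i r) => [->|] //; apply: hi.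
  have ev : betap *m v = rho0 *: v.
    by apply/eqP; rewrite eq_sym -subr_eq0 -mul_scalar_mx -mulmxBl -/B hBv.
  by rewrite (uniq v ev) v0 scale0r.
have hunit : B' \in unitmx.
  rewrite -unitmx_tr -row_free_unit -kermx_eq0; apply/eqP.
  have hK : B' *m (kermx B'^T)^T = 0.
    by rewrite -{1}(trmxK B') -trmx_mul mulmx_ker trmx0.
  apply: trmx_inj; rewrite trmx0; apply/matrixP => i j.
  have hc : B' *m col j (kermx B'^T)^T = 0 by rewrite colE mulmxA hK mul0mx.
  by move: (Binj _ hc) => /matrixP /(_ i 0); rewrite !mxE.
pose e : 'cV[R]_n.+1 := \col_i ((i == r)%:R).
have ew' : B' *m w = e.
  apply/matrixP => i k; rewrite (ord1 k) [RHS]mxE.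
  case: (eqVneq i r) => [->|hir]; first by rewrite B'r w0.
  by rewrite B'i // /B mulmxBl mul_scalar_mx ew hrl subrr mxE.

have hdet : \det B' *: w = \adj B' *m e.
  by rewrite -ew' mulmxA mul_adj_mx mul_scalar_mx.
have hx := vv_iter n_gt0 hB hpos 0 m.
rewrite add0n -/y -/w in hx; change (iter 0 _ x) with x in hx.
set D := \prod_(j < m) _ in hx.
set M := \prod_(j < m) _ in hx.
pose MQ := \prod_(j < m) betaQ n (selk (iter (0 + j) (@selmer R n) x)).
have hM : M = map_mx ratr MQ.
  by rewrite /M -prod_map; apply: eq_bigr => j _; apply: beta_map.
have hD : 0 < D.
  by apply: prodr_gt0 => j _; apply: (sc1_gt0 n_gt0 (inB_iter n_gt0 hB hpos _) (hpos _)).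
have key : \det B' *: vv x = D *: (M *m (\adj B' *m e)).
  by rewrite hx scalerA mulrC -scalerA scalemxAr hdet.
have cfu : commr_rmorph (ratr : rat -> R) rho0 by move=> a; exact: mulrC.
pose phi := horner_morph cfu.
pose Cp : 'M[{poly rat}]_n.+1 :=
  \matrix_(i < n.+1, j < n.+1) (if i == r then (j == ord0)%:R else char_poly_mx AQ i j).
pose ep : 'cV[{poly rat}]_n.+1 := \col_i ((i == r)%:R).
pose Pv := map_mx polyC MQ *m (\adj Cp *m ep).
have hCp : map_mx phi Cp = B'.
  apply/matrixP => i j; rewrite !mxE /phi; case: ifP => _; first by rewrite rmorph_nat.
  by rewrite /B hA !mxE rmorphB rmorphMn /= horner_morphX horner_morphC.
have hep : map_mx phi ep = e.
  by apply/matrixP => i j; rewrite !mxE /phi rmorph_nat.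
have hMp : map_mx phi (map_mx polyC MQ) = M.
  by rewrite hM; apply/matrixP => i j; rewrite !mxE /phi horner_morphC.
have hPv : map_mx phi Pv = M *m (\adj B' *m e).
  by rewrite /Pv /phi !map_mxM map_mx_adj -/phi hCp hep hMp.
have hdet0 : \det B' != 0 by rewrite -unitfE -unitmxE.
have e0 : \det B' = D * phi (Pv ord0 0).
  move: key => /matrixP /(_ ord0 0); rewrite -hPv !mxE /=.
  by rewrite mulr1.
have hQ : phi (Pv ord0 0) != 0.
  by apply: contraNneq hdet0 => h; rewrite e0 h mulr0.
move=> i hi.
exists (Pv (inord i) 0), (Pv ord0 0); split; first exact: hQ.
have ei : \det B' * selcoord x i = D * phi (Pv (inord i) 0).
  move: key => /matrixP /(_ (inord i) 0); rewrite -hPv !mxE inordK; last by move: hi; lia.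
  by rewrite ifF //; move: hi; lia.
change ((map_poly ratr (Pv (inord i) 0)).[rho0]) with (phi (Pv (inord i) 0)).
change ((map_poly ratr (Pv ord0 0)).[rho0]) with (phi (Pv ord0 0)).
move: ei; rewrite e0 => ei.
have hD0 : D != 0 by rewrite lt0r_neq0.
rewrite -[selcoord x i](@mulKf _ (D * phi (Pv ord0 0))) ?mulf_neq0 // ei.
by field; rewrite hQ hD0.
Qed.
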